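(* Let $\Sigma$ be a finite nonempty set of $d\times d$ real matrices with nonnegative entries. For each $i\in\{1,\dots,d\}$ let \[ \delta_i=\gcd\{n\ge1:\ \|\Sigma^n\|_{i,i}>0\}, \] with $\delta_i=1$ if this set is empty. Let $\Delta$ be a positive integer that is a multiple of every $\delta_i$. Then \[ \rho(\Sigma)=\lim_{m\to\infty}\max_i\sqrt[m\Delta]{\|\Sigma^{m\Delta}\|_{i,i}}=\lim_{m\to\infty}\max_{A_1,\dots,A_{m\Delta}\in\Sigma}\sqrt[m\Delta]{\operatorname{tr}(A_1\cdots A_{m\Delta})}. \]
   Context: For $n\ge1$, $\|\Sigma^n\|_{i,j}=\max_{A_1,\dots,A_n\in\Sigma}(A_1\cdots A_n)_{i,j}$. The joint spectral radius is $\rho(\Sigma)=\lim_{n\to\infty}\sqrt[n]{\max_{A_1,\dots,A_n\in\Sigma}\|A_1\cdots A_n\|}$ for any matrix norm (the limit exists and is independent of the norm). $\operatorname{tr}$ denotes the trace. *)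

(* Defs.v *)
From HB Require Import structures.
From mathcomp Require Import all_boot all_order all_algebra.
From mathcomp Require Import all_classical all_reals all_analysis.
Set Implicit Arguments. Unset Strict Implicit. Unset Printing Implicit Defensive.
Import Order.TTheory GRing.Theory Num.Theory.
Import numFieldNormedType.Exports.
Local Open Scope ring_scope.
Local Open Scope classical_set_scope.

Fixpoint prods (R : realType) (d : nat) (Sig : seq 'M[R]_d) (n : nat)
  : seq 'M[R]_d :=
  match n with
  | 0 => [:: 1%:M]
  | n'.+1 => [seq A *m B | A <- Sig, B <- prods Sig n']
  end.

(* ||Sigma^n||_{i,j} = max over products of length n of the (i,j) entry.
   (Entries are nonnegative in the theorem, so the base value 0 is harmless.) *)
Definition jent (R : realType) (d : nat) (Sig : seq 'M[R]_d) (n : nat)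
  (i j : 'I_d) : R :=
  \big[Num.max/0]_(P <- prods Sig n) P i j.

Definition jtr (R : realType) (d : nat) (Sig : seq 'M[R]_d) (n : nat) : R :=
  \big[Num.max/0]_(P <- prods Sig n) \tr P.

(* max over products of length n of the matrix norm (MathComp-Analysis'
   sup-norm on matrices: max of the absolute values of the entries) *)
Definition jnorm (R : realType) (d : nat) (Sig : seq 'M[R]_d) (n : nat) : R :=
  \big[Num.max/0]_(P <- prods Sig n) `|P|.

Definition jsr (R : realType) (d : nat) (Sig : seq 'M[R]_d) : R :=
  lim ((fun n : nat => jnorm Sig n.+1 `^ (n.+1%:R)^-1) @ \oo).

Definition gcd_of (S : set nat) (g : nat) : Prop :=
  (S = set0 /\ g = 1%N) \/
  (S !=set0 /\ (forall n, S n -> (g %| n)%N) /\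
   (forall h, (forall n, S n -> (h %| n)%N) -> (h %| g)%N)).

Definition is_delta (R : realType) (d : nat) (Sig : seq 'M[R]_d) (i : 'I_d)
  (g : nat) : Prop :=
  gcd_of [set n | (0 < n)%N /\ 0 < jent Sig n i i] g.

(* Main.v *)
Require Import Defs.
From HB Require Import structures.
From mathcomp Require Import all_boot all_order all_algebra.
From mathcomp Require Import all_classical all_reals all_analysis.
From mathcomp Require Import zify ring lra.
Import Order.TTheory GRing.Theory Num.Theory.
Import numFieldNormedType.Exports.
Local Open Scope ring_scope.
Local Open Scope classical_set_scope.
Set Implicit Arguments. Unset Strict Implicit.
Section Semi.
Variable T : nat -> Prop.
Hypothesis T0 : T 0%N.
Hypothesis TD : forall a b, T a -> T b -> T (a + b)%N.

Lemma T_mul k x : T x -> T (k * x)%N.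
Proof. by move=> Tx; elim: k => [|k IH]; rewrite ?mul0n // mulSn; apply: TD. Qed.

Lemma bez_list (l : seq nat) : (forall x, x \in l -> (0 < x)%N /\ T x) ->
  exists P Q, [/\ T P, T Q & P = (Q + foldr gcdn 0 l)%N].
Proof.
elim: l => [|a l IH] H; first by exists 0%N, 0%N.
have [P' [Q' [TP TQ EP]]] : exists P Q, [/\ T P, T Q & P = (Q + foldr gcdn 0 l)%N].
  by apply: IH => x xl; apply: H; rewrite inE xl orbT.
have [a0 Ta] := H a (mem_head _ _).
case: (egcdnP (foldr gcdn 0 l) a0) => km kn E _.
exists (km * a + kn * Q')%N, (kn * P')%N; split.
- by apply: TD; apply: T_mul.
- by apply: T_mul.
rewrite /= E EP mulnDr; ring.
Qed.

Lemma large_mult g x : (0 < g)%N -> (0 < x)%N -> (g %| x)%N -> T x -> T (x + g)%N ->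
  exists N, forall m, (N <= m)%N -> T (m * g)%N.
Proof.
move=> g0 x0 /dvdnP [q Eq] Tx Txg; exists (q * q)%N => m Hm.
have q0 : (0 < q)%N by move: x0; rewrite Eq muln_gt0 => /andP[].
set c := (m %/ q)%N; set j := (m %% q)%N.
have Em : m = (c * q + j)%N by rewrite /c /j -divn_eq.
have jq : (j < q)%N by rewrite /j ltn_mod.
have cq : (q <= c)%N by rewrite /c leq_divRL.
have -> : (m * g = (c - j) * x + j * (x + g))%N.
  rewrite Em Eq; have : (j <= c)%N by apply: leq_trans (ltnW jq) cq.
  move=> jc; rewrite -{1}(subnK jc); ring.
by apply: TD; apply: T_mul.
Qed.
End Semi.
Lemma fg_dvd (l : seq nat) (x : nat) : x \in l -> (foldr gcdn 0 l %| x)%N.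
Proof.
elim: l => [//|a l IH]; rewrite inE => /orP[/eqP->|xl] /=; first exact: dvdn_gcdl.
by apply: dvdn_trans (dvdn_gcdr _ _) (IH xl).
Qed.

Lemma fg_univ (l : seq nat) h : (forall x, x \in l -> (h %| x)%N) ->
  (h %| foldr gcdn 0 l)%N.
Proof.
elim: l => [|a l IH] H /=; first exact: dvdn0.
rewrite dvdn_gcd H ?mem_head //=; apply: IH => x xl; apply: H.
by rewrite inE xl orbT.
Qed.

Lemma fg_pos (l : seq nat) x : x \in l -> (0 < x)%N -> (0 < foldr gcdn 0 l)%N.
Proof.
move=> xl x0; have := @fg_dvd l x xl; rewrite lt0n; apply: contraTneq => ->.
by rewrite dvd0n -lt0n.
Qed.

Lemma semigroup_mult (p : nat -> bool) (n0 Delta : nat) :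
  p 0%N -> (forall a b, p a -> p b -> p (a + b)%N) ->
  (0 < n0)%N -> p n0 -> (0 < Delta)%N ->
  (forall g, gcd_of [set n | (0 < n)%N /\ p n] g -> (g %| Delta)%N) ->
  exists N, forall m, (N <= m)%N -> p (m * Delta)%N.
Proof.
move=> p0 pD n00 pn0 D0 HD.
pose L N := seq.filter p (iota 1 N).
pose gN N := foldr gcdn 0 (L N).
have memL N n : (n \in L N) = [&& p n, (0 < n)%N & (n < N.+1)%N].
  by rewrite /L mem_filter mem_iota add1n.
have gpos N : (n0 <= N)%N -> (0 < gN N)%N.
  by move=> HN; apply: (@fg_pos _ n0) => //; rewrite memL pn0 n00 ltnS.
have [N [HN0 HN]] : exists N, (n0 <= N)%N /\
    forall n, (0 < n)%N -> p n -> (gN N %| n)%N.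
  have key : forall k N, (n0 <= N)%N -> gN N = k -> exists N', (n0 <= N')%N /\
      forall n, (0 < n)%N -> p n -> (gN N' %| n)%N.
    elim/ltn_ind => k IH N HN Ek.
    have [H|H] := pselect (forall n, (0 < n)%N -> p n -> (gN N %| n)%N).
      by exists N.
    have [n Hn] : exists n, ~ ((0 < n)%N -> p n -> (gN N %| n)%N).
      by apply/existsNP.
    have n0' : (0 < n)%N by apply: contrapT => C; apply: Hn => /C.
    have pn : p n by apply: contrapT => C; apply: Hn => _ /C.
    have Hnd : ~ (gN N %| n)%N by move=> C; apply: Hn => _ _.

    have HN' : (n0 <= N + n)%N by apply: leq_trans HN (leq_addr _ _).
    apply: (IH (gN (N + n)%N) _ (N + n)%N HN' erefl).
    have d1 : (gN (N + n) %| gN N)%N.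
      apply: fg_univ => x; rewrite memL => /and3P[px x0 xN].
      apply: fg_dvd; rewrite memL px x0 /=; lia.
    have d2 : (gN (N + n) %| n)%N.
      by apply: fg_dvd; rewrite memL pn n0' /=; lia.
    rewrite -Ek ltn_neqAle dvdn_leq ?gpos // andbT.
    by apply: contra_notN Hnd => /eqP <-.
  exact: (key _ n0 (leqnn _) erefl).
set g := gN N.
have gD : (g %| Delta)%N.
  apply: HD; right; split; first by exists n0.
  split; first by move=> n [n0' pn]; apply: HN.
  move=> h Hh; apply: fg_univ => x; rewrite memL => /and3P[px x0 _].
  exact: Hh.
have g0 : (0 < g)%N by apply: gpos.
have [P [Q [pP pQ EP]]] : exists P Q, [/\ p P, p Q & P = (Q + g)%N].
  apply: bez_list => // x; rewrite memL => /and3P[px x0 _]; by split.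
have [N1 HN1] : exists N1, forall m, (N1 <= m)%N -> p (m * g)%N.
  apply: (@large_mult (fun n => p n) _ _ g (Q + n0)%N) => //.
  - by rewrite addn_gt0 n00 orbT.
  - rewrite dvdn_addr; first exact: HN.
    by case: (posnP Q) => [->|Q0]; [exact: dvdn0 | exact: HN].
  - exact: pD.
  - by rewrite -addnA [(n0 + g)%N]addnC addnA -EP; exact: pD.
move/dvdnP: gD => [u Eu].
have u0 : (0 < u)%N by move: D0; rewrite Eu muln_gt0 => /andP[].
exists N1 => m Hm; rewrite Eu mulnA; apply: HN1.
by apply: leq_trans Hm _; rewrite leq_pmulr.
Qed.
Section Pw.
Variable R : realType.

Definition rt (n : nat) (x : R) := x `^ (n%:R)^-1.

Lemma rt_ge0 n x : 0 <= rt n x.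
Proof. exact: powR_ge0. Qed.

Lemma rtK n b : (0 < n)%N -> 0 <= b -> rt n (b ^+ n) = b.
Proof.
move=> n0 b0; rewrite /rt -powR_mulrn // -powRrM mulfV ?powRr1 //.
by rewrite pnatr_eq0 -lt0n.
Qed.

Lemma rt_mono n x y : 0 <= x -> x <= y -> rt n x <= rt n y.
Proof.
move=> x0 xy; apply: ge0_ler_powR => //; rewrite ?invr_ge0 ?ler0n //.
by rewrite nnegrE (le_trans x0 xy).
Qed.

Lemma rt_le n x b : (0 < n)%N -> 0 <= x -> 0 <= b -> x <= b ^+ n -> rt n x <= b.
Proof. by move=> n0 x0 b0 H; rewrite -(rtK n0 b0); apply: rt_mono. Qed.

Lemma rt_ge n x b : (0 < n)%N -> 0 <= b -> b ^+ n <= x -> b <= rt n x.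
Proof.
move=> n0 b0 H; rewrite -{1}(rtK n0 b0); apply: rt_mono => //.
exact: exprn_ge0.
Qed.

Lemma rt_le_inv n x b : (0 < n)%N -> 0 <= x -> rt n x <= b -> x <= b ^+ n.
Proof.
move=> n0 x0 H; have r0 := rt_ge0 n x.
have -> : x = (rt n x) ^+ n.
  rewrite /rt -powR_mulrn // -powRrM mulVf ?powRr1 //.
  by rewrite pnatr_eq0 -lt0n.
by apply: lerXn2r; rewrite ?nnegrE // (le_trans r0 H).
Qed.

Lemma rt0 n : (0 < n)%N -> rt n 0 = 0.
Proof. by move=> n0; rewrite /rt powR0 // invr_eq0 pnatr_eq0 -lt0n. Qed.

Definition ev (P : nat -> Prop) := exists N, forall n, (N <= n)%N -> P n.

Lemma ev_and P Q : ev P -> ev Q -> ev (fun n => P n /\ Q n).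
Proof.
move=> [N1 H1] [N2 H2]; exists (maxn N1 N2) => n Hn.
by split; [apply: H1 | apply: H2]; apply: leq_trans Hn; rewrite ?leq_maxl ?leq_maxr.
Qed.

Lemma ev_near (P : nat -> Prop) : ev P -> \forall n \near \oo, P n.
Proof. by move=> [N HN]; apply: filterS (nbhs_infty_ge N) => n; apply: HN. Qed.

Lemma bern (h : R) k : 0 <= h -> 1 + k%:R * h <= (1 + h) ^+ k.
Proof.
move=> h0; elim: k => [|k IH]; first by rewrite mul0r addr0 expr0.
rewrite exprS -natr1 mulrDl mul1r.
have E : 0 <= k%:R * h by apply: mulr_ge0; rewrite ?ler0n.
apply: le_trans (_ : (1 + h) * (1 + k%:R * h) <= _); last first.
  by apply: ler_wpM2l => //; apply: addr_ge0.
have : 0 <= h * (k%:R * h) by apply: mulr_ge0.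
lra.
Qed.

Lemma grow (q C : R) : 1 < q -> ev (fun k => C <= q ^+ k).
Proof.
move=> q1; set h := q - 1; have h0 : 0 < h by rewrite /h subr_gt0.
have [N _ HN] := nbhs_infty_ger (C / h).
exists N => k Hk; have := HN _ Hk => /= Ck.
have : C <= k%:R * h by rewrite -ler_pdivrMr.
have E1 : 1 + h = q by rewrite /h addrC subrK.
have := bern k (ltW h0); rewrite E1.
have : 0 <= 1 by []. lra.
Qed.

Lemma absorb_up (C t t' : R) : 0 <= t -> t < t' -> ev (fun k => C * t ^+ k <= t' ^+ k).
Proof.
move=> t0 tt; have t'0 : 0 < t' by apply: le_lt_trans tt.
case: (eqVneq t 0) => [->|tn0].
  exists 1%N => k k1; rewrite expr0n; case: k k1 => // k _ /=.
  by rewrite mulr0 exprn_ge0 // ltW.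
have tp : 0 < t by rewrite lt_def tn0 t0.
have q1 : 1 < t' / t by rewrite ltr_pdivlMr // mul1r.
have [N HN] := grow C q1.
exists N => k Hk; have := HN k Hk => Cq.
have -> : t' ^+ k = (t' / t) ^+ k * t ^+ k by rewrite -exprMn divfK.
by apply: ler_wpM2r => //; apply: exprn_ge0.
Qed.

Lemma absorb_lo (c t t' : R) : 0 < c -> 0 <= t -> t < t' ->
  ev (fun k => t ^+ k <= c * t' ^+ k).
Proof.
move=> c0 t0 tt; have t'0 : 0 < t' by apply: le_lt_trans tt.
case: (eqVneq t 0) => [->|tn0].
  exists 1%N => k k1; rewrite expr0n; case: k k1 => // k _ /=.
  by apply: mulr_ge0; rewrite ?exprn_ge0 // ltW.
have tp : 0 < t by rewrite lt_def tn0 t0.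
have q1 : 1 < t' / t by rewrite ltr_pdivlMr // mul1r.
have [N HN] := grow c^-1 q1.
exists N => k Hk; have := HN k Hk => Cq.
have -> : t' ^+ k = (t' / t) ^+ k * t ^+ k by rewrite -exprMn divfK.
rewrite mulrA -{1}(mul1r (t ^+ k)); apply: ler_wpM2r; first exact: exprn_ge0.
by rewrite -ler_pdivrMl // mulr1.
Qed.

Lemma conv_root (X : nat -> R) (nn : nat -> nat) (s : R) :
  (forall m, (0 < nn m)%N) -> (forall m, (m <= nn m)%N) ->
  (forall m, 0 <= X m) -> 0 <= s ->
  (forall t, s < t -> exists C, ev (fun m => X m <= C * t ^+ nn m)) ->
  (forall t, 0 < t -> t < s -> exists2 c, 0 < c & ev (fun m => c * t ^+ nn m <= X m)) ->
  (fun m => rt (nn m) (X m)) @ \oo --> s.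
Proof.
move=> npos nge X0 s0 Up Lo; apply/cvgrPdist_le => eps eps0; apply: ev_near.
have evnn (P : nat -> Prop) : ev P -> ev (fun m => P (nn m)).
  by move=> [N HN]; exists N => m Hm; apply: HN; apply: leq_trans Hm (nge m).
have hup : ev (fun m => rt (nn m) (X m) <= s + eps).
  have st : s < s + eps / 2 by lra.
  have [C HC] := Up (s + eps / 2) st.
  have a0 : 0 <= s + eps / 2 by lra.
  have a1 : s + eps / 2 < s + eps by lra.
  have H := evnn _ (absorb_up C a0 a1).
  have [N HN] := ev_and HC H; exists N => m /HN [H1 H2].
  apply: rt_le; [exact: npos | exact: X0 | lra | lra].
have hlo : ev (fun m => s - eps <= rt (nn m) (X m)).
  case: (lerP (s - eps) 0) => se.
    by exists 0%N => m _; apply: le_trans se (rt_ge0 _ _).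
  have b0 : 0 < s - eps / 2 by lra.
  have b1 : s - eps / 2 < s by lra.
  have [c c0 HC] := Lo (s - eps / 2) b0 b1.
  have a0 : 0 <= s - eps by lra.
  have a1 : s - eps < s - eps / 2 by lra.
  have H := evnn _ (absorb_lo c0 a0 a1).
  have [N HN] := ev_and HC H; exists N => m /HN [H1 H2].
  apply: rt_ge; [exact: npos | lra | lra].
have [N HN] := ev_and hup hlo; exists N => m /HN [H1 H2].
rewrite ler_distl; apply/andP; split; lra.
Qed.
End Pw.
Section Walk.
Variables (R : realType) (d : nat) (w : 'I_d -> 'I_d -> R).

Fixpoint wt (x : 'I_d) (s : seq 'I_d) : R :=
  match s with [::] => 1 | y :: s' => w x y * wt y s' end.

Lemma wt_cat x s1 y s2 : wt x (s1 ++ y :: s2) = wt x (rcons s1 y) * wt y s2.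
Proof.
elim: s1 x => [|z s1 IH] x /=; first by rewrite mulr1.
by rewrite IH mulrA.
Qed.

Hypothesis w0 : forall a b, 0 <= w a b.

Lemma wt_ge0 x s : 0 <= wt x s.
Proof. by elim: s x => [|y s IH] x /=; rewrite ?ler01 // mulr_ge0. Qed.

Variables (B tau : R).
Hypothesis wB : forall a b, w a b <= B.
Hypothesis tau0 : 0 < tau.
Hypothesis cyc : forall x s, wt x (rcons s x) <= tau ^+ (size s).+1.

Lemma size_undup_le (s : seq 'I_d) : (size (undup s) <= d)%N.
Proof.
have := card_uniqP (undup_uniq s) => /eqP /eqP <-.
by rewrite (eq_card (mem_undup s)); apply: leq_trans (max_card _) _; rewrite card_ord.
Qed.

Lemma walk_bound x s :
  wt x s <= (Num.max 1 (B / tau)) ^+ d * tau ^+ size s.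
Proof.
set M := Num.max 1 (B / tau).
have M1 : 1 <= M by rewrite le_max lexx.
have M0 : 0 <= M by apply: le_trans M1.
have BM : B <= M * tau.
  by rewrite -ler_pdivrMr // le_max lexx orbT.
suff H : forall n s x, (size s <= n)%N ->
    wt x s <= M ^+ size (undup (x :: s)) * tau ^+ size s.
  apply: le_trans (H _ s x (leqnn _)) _; apply: ler_wpM2r; first by rewrite exprn_ge0 // ltW.
  by apply: ler_weXn2l => //; apply: size_undup_le.
elim=> [|n IH] q z.
  by case: q => [|y q] //= _; rewrite expr0 mulr1 expr1.
case: q => [|y q] Hs.
  by rewrite /= expr0 mulr1 expr1.
case: (boolP (z \in y :: q)) => zin.
  case/splitPr: zin Hs => p1 p2 Hs.
  rewrite wt_cat.
  have Hp2 : (size p2 <= n)%N.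
    by move: Hs; rewrite size_cat /= addnS ltnS => /(leq_trans _); apply; rewrite leq_addl.
  apply: le_trans (_ : tau ^+ (size p1).+1 * (M ^+ size (undup (z :: p2)) * tau ^+ size p2) <= _).
    apply: ler_pM; [exact: wt_ge0 | exact: wt_ge0 | exact: cyc | exact: IH].
  have Hsz : (size (undup (z :: p2)) <= size (undup (z :: p1 ++ z :: p2)))%N.
    apply: uniq_leq_size; first exact: undup_uniq.
    move=> u; rewrite !mem_undup !inE mem_cat !inE.
    by case/orP=> ->; rewrite ?orbT.
  have -> : size (p1 ++ z :: p2) = ((size p1).+1 + size p2)%N.
    by rewrite size_cat /= addSn addnS.
  rewrite mulrCA -exprD; apply: ler_wpM2r.
    by rewrite exprn_ge0 // ltW.
  exact: ler_weXn2l.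
have Hq : (size q <= n)%N by [].
have -> : undup [:: z, y & q] = z :: undup (y :: q).
  change ((if z \in y :: q then undup (y :: q) else z :: undup (y :: q)) = z :: undup (y :: q)).
  by rewrite (negbTE zin).
apply: le_trans (_ : B * (M ^+ size (undup (y :: q)) * tau ^+ size q) <= _).
  apply: ler_pM; [exact: w0 | exact: wt_ge0 | exact: wB | exact: IH].
set k := size (undup (y :: q)).
rewrite (_ : size (z :: undup (y :: q)) = k.+1) // (_ : size (y :: q) = (size q).+1) //.
rewrite !exprS (_ : M * M ^+ k * (tau * tau ^+ size q) = (M * tau) * (M ^+ k * tau ^+ size q)); last by ring.
by apply: ler_wpM2r => //; apply: mulr_ge0; apply: exprn_ge0; rewrite // ltW.
Qed.
End Walk.
Section BMax.
Variable (R : realType) (T : eqType).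

Lemma bmax_ge (r : seq T) (f : T -> R) x : x \in r ->
  f x <= \big[Num.max/0]_(y <- r) f y.
Proof.
elim: r => [//|a r IH]; rewrite inE big_cons => /orP[/eqP->|xr].
  by rewrite le_max lexx.
by rewrite le_max IH ?orbT.
Qed.

Lemma bmax_le (r : seq T) (f : T -> R) c : 0 <= c -> (forall x, x \in r -> f x <= c) ->
  \big[Num.max/0]_(y <- r) f y <= c.
Proof.
move=> c0; elim: r => [|a r IH] H; first by rewrite big_nil.
rewrite big_cons ge_max H ?mem_head //= IH // => x xr; apply: H.
by rewrite inE xr orbT.
Qed.

Lemma bmax_ge0 (r : seq T) (f : T -> R) : 0 <= \big[Num.max/0]_(y <- r) f y.
Proof. by elim: r => [|a r IH]; rewrite ?big_nil // big_cons le_max IH orbT. Qed.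

Lemma bmax_attained (r : seq T) (f : T -> R) : r != [::] ->
  (forall x, x \in r -> 0 <= f x) ->
  exists2 x, x \in r & \big[Num.max/0]_(y <- r) f y = f x.
Proof.
elim: r => [//|a r IH] _ H; rewrite big_cons.
case: (eqVneq r [::]) => [->|rne].
  by exists a; rewrite ?mem_head // big_nil max_l // H ?mem_head.
have [x xr Ex] := IH rne (fun x xr => H x (@mem_behead _ (a :: r) x xr)).
rewrite Ex; case: (leP (f a) (f x)) => fax.
  by exists x; rewrite // inE xr orbT.
by exists a; rewrite ?mem_head.
Qed.
End BMax.

Section Mat.
Variables (R : realType) (d : nat) (Sig : seq 'M[R]_d).
Hypothesis Sig_nn : forall A, A \in Sig -> forall i j, 0 <= A i j.
Hypothesis Sig_ne : Sig != [::].

Local Notation e := (jent Sig).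

Lemma prods_nn n P : P \in prods Sig n -> forall i j, 0 <= P i j.
Proof.
elim: n P => [|n IH] P /=.
  by rewrite inE => /eqP-> i j; rewrite mxE ler0n.
move=> /allpairsP [[A B] /= [HA HB ->]] i j; rewrite mxE.
by apply: sumr_ge0 => l _; apply: mulr_ge0; [apply: Sig_nn | apply: IH].
Qed.

Lemma prods_mul a b P Q : P \in prods Sig a -> Q \in prods Sig b ->
  P *m Q \in prods Sig (a + b).
Proof.
elim: a P => [|a IH] P /=.
  by rewrite inE => /eqP-> HQ; rewrite mul1mx.
move=> /allpairsP [[A B] /= [HA HB ->]] HQ; rewrite -mulmxA.
by apply: allpairs_f => //; apply: IH.
Qed.

Lemma prods_split a b P : P \in prods Sig (a + b) ->
  exists P1 P2, [/\ P1 \in prods Sig a, P2 \in prods Sig b & P = P1 *m P2].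
Proof.
elim: a P => [|a IH] P /=.
  by move=> HP; exists 1%:M, P; rewrite mul1mx mem_seq1.
move=> /allpairsP [[A B] /= [HA HB ->]].
have [P1 [P2 [H1 H2 ->]]] := IH _ HB.
exists (A *m P1), P2; split => //; last by rewrite mulmxA.
exact: allpairs_f.
Qed.

Lemma prods_ne n : prods Sig n != [::].
Proof.
elim: n => [//|n IH] /=.
have ne_mem (s : seq 'M[R]_d) : s != [::] -> exists x, x \in s.
  by case: s => [//|x s] _; exists x; exact: mem_head.
have [A HA] := ne_mem _ Sig_ne; have [B HB] := ne_mem _ IH.
apply/eqP => E; have := allpairs_f (fun A B => A *m B) HA HB.
by rewrite E.
Qed.

Lemma e_ge n P j k : P \in prods Sig n -> P j k <= e n j k.
Proof. by move=> HP; exact: (@bmax_ge R _ (prods Sig n) (fun P : 'M[R]_d => P j k) P HP). Qed.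

Lemma e_ge0 n j k : 0 <= e n j k.
Proof. exact: bmax_ge0. Qed.

Lemma e_attain n j k : exists2 P, P \in prods Sig n & e n j k = P j k.
Proof.
apply: (@bmax_attained R _ (prods Sig n) (fun P : 'M[R]_d => P j k)); first exact: prods_ne.
by move=> P HP; apply: prods_nn HP j k.
Qed.

Lemma e_le n j k c : 0 <= c -> (forall P, P \in prods Sig n -> P j k <= c) ->
  e n j k <= c.
Proof. by move=> c0 H; apply: bmax_le. Qed.

Lemma e_super a b j l k : e a j l * e b l k <= e (a + b) j k.
Proof.
have [P HP ->] := e_attain a j l; have [Q HQ ->] := e_attain b l k.
apply: le_trans (e_ge _ _ (prods_mul HP HQ)); rewrite mxE.
rewrite (bigD1 l) //= lerDl; apply: sumr_ge0 => i _.
apply: mulr_ge0. exact: (prods_nn HP j i). exact: (prods_nn HQ i k).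
Qed.

Lemma e_sub a b j k : e (a + b) j k <= \sum_l e a j l * e b l k.
Proof.
apply: e_le; first by apply: sumr_ge0 => l _; apply: mulr_ge0; apply: e_ge0.
move=> P /prods_split [P1 [P2 [H1 H2 ->]]]; rewrite mxE.
apply: ler_sum => l _; apply: ler_pM; try apply: prods_nn; eauto; exact: e_ge.
Qed.

Lemma e0 j k : e 0 j k = (j == k)%:R.
Proof. by rewrite /jent big_cons big_nil mxE max_l // ler0n. Qed.


Hypothesis d0 : (0 < d)%N.

Lemma sum_le_max (f : 'I_d -> R) : exists l, \sum_i f i <= d%:R * f l.
Proof.
pose i0 := Ordinal d0.
case: (@arg_maxP _ _ _ i0 predT f isT) => l _ Hl.
exists l; apply: le_trans (_ : \sum_(i < d) f l <= _).
  by apply: ler_sum => i _; apply: Hl.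
by rewrite sumr_const card_ord mulr_natl.
Qed.

Definition alpha := \sum_(A <- Sig) \sum_i \sum_j A i j.
Definition beta := d%:R * alpha + 1.

Lemma alpha_ge A i j : A \in Sig -> A i j <= alpha.
Proof.
move=> HA; rewrite /alpha (big_rem A HA) /=.
have H1 : 0 <= \sum_(B <- rem A Sig) \sum_i \sum_j B i j.
  rewrite big_seq; apply: sumr_ge0 => B /mem_rem HB.
  by apply: sumr_ge0 => i' _; apply: sumr_ge0 => j' _; apply: Sig_nn.
apply: le_trans (_ : \sum_i \sum_j A i j <= _); last by rewrite lerDl.
rewrite (bigD1 i) //= (bigD1 j) //=.
rewrite -addrA lerDl; apply: addr_ge0.
  by apply: sumr_ge0 => j' _; apply: Sig_nn.
by apply: sumr_ge0 => i' _; apply: sumr_ge0 => j' _; apply: Sig_nn.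
Qed.

Lemma alpha_ge0 : 0 <= alpha.
Proof.
rewrite /alpha big_seq; apply: sumr_ge0 => B HB.
by apply: sumr_ge0 => i' _; apply: sumr_ge0 => j' _; apply: Sig_nn.
Qed.

Lemma beta_ge1 : 1 <= beta.
Proof. by rewrite /beta lerDr mulr_ge0 ?ler0n ?alpha_ge0. Qed.

Lemma ent_bound n P j k : P \in prods Sig n -> P j k <= beta ^+ n.
Proof.
elim: n P j k => [|n IH] P j k /=.
  by rewrite inE => /eqP->; rewrite mxE expr0; case: (j == k); rewrite ?ler01.
move=> /allpairsP [[A B] /= [HA HB ->]]; rewrite mxE.
apply: le_trans (_ : \sum_(l < d) alpha * beta ^+ n <= _).
  apply: ler_sum => l _; apply: ler_pM; [exact: Sig_nn | exact: prods_nn HB l k |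
    exact: alpha_ge | exact: IH].
rewrite sumr_const card_ord -mulr_natl mulrA exprS ler_wpM2r //.
  by apply: exprn_ge0; apply: le_trans beta_ge1.
by rewrite /beta lerDl.
Qed.

Lemma e_bound n j k : e n j k <= beta ^+ n.
Proof.
apply: e_le; first by apply: exprn_ge0; apply: le_trans beta_ge1.
by move=> P HP; apply: ent_bound HP.
Qed.

Definition Es := [set x : R | exists i n, (0 < n)%N /\ x = rt n (e n i i)].
Definition srad := sup Es.

Lemma Es_ub x : Es x -> x <= beta.
Proof.
move=> [i [n [n0 ->]]]; apply: rt_le => //; first exact: e_ge0.
  by apply: le_trans beta_ge1.
exact: e_bound.
Qed.

Lemma Es_ne : Es (rt 1 (e 1 (Ordinal d0) (Ordinal d0))).
Proof. by exists (Ordinal d0), 1%N. Qed.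

Lemma Es_sup : has_sup Es.
Proof. split; first by eexists; exact: Es_ne. by exists beta => x /Es_ub. Qed.

Lemma srad_ge0 : 0 <= srad.
Proof. apply: le_trans (rt_ge0 _ _) (sup_upper_bound Es_sup Es_ne). Qed.

Lemma srad_ub n i : (0 < n)%N -> e n i i <= srad ^+ n.
Proof.
move=> n0; apply: rt_le_inv => //; first exact: e_ge0.
by apply: (sup_upper_bound Es_sup); exists i, n.
Qed.

Lemma srad_adh t : 0 <= t -> t < srad -> exists i n, (0 < n)%N /\ t ^+ n < e n i i.
Proof.
move=> t0 ts; have st : 0 < srad - t by rewrite subr_gt0.
have [x [i [n [n0 ->]]] Hx] := sup_adherent st Es_sup.
exists i, n; split => //; rewrite ltNge; apply/negP => H.
have := rt_le n0 (e_ge0 _ _ _) t0 H; move: Hx; rewrite /srad; lra.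
Qed.

Lemma norm_entry (P : 'M[R]_d) j k : `|P j k| <= `|P|.
Proof.
change (`|P j k| <= mx_norm P); rewrite mx_normrE.
exact: (le_bigmax _ (fun ij : 'I_d * 'I_d => `|P ij.1 ij.2|) (j, k)).
Qed.

Lemma norm_le (P : 'M[R]_d) c : 0 <= c -> (forall j k, `|P j k| <= c) -> `|P| <= c.
Proof.
move=> c0 H; change (mx_norm P <= c); rewrite mx_normrE.
by apply: bigmax_le => // ij _; apply: H.
Qed.

Lemma jnorm_ge n j k : e n j k <= jnorm Sig n.
Proof.
have [P HP ->] := e_attain n j k.
apply: le_trans (ler_norm _) _; apply: le_trans (norm_entry P j k) _.
exact: (@bmax_ge R _ (prods Sig n) (fun P : 'M[R]_d => `|P|) P HP).
Qed.

Lemma jnorm_ge0 n : 0 <= jnorm Sig n.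
Proof. exact: bmax_ge0. Qed.

Lemma jnorm_le n c : 0 <= c -> (forall j k, e n j k <= c) -> jnorm Sig n <= c.
Proof.
move=> c0 H; apply: bmax_le => // P HP; apply: norm_le => // j k.
rewrite ger0_norm; last exact: (prods_nn HP j k).
by apply: le_trans (H j k); apply: e_ge.
Qed.

Lemma jtr_le n : (0 < n)%N -> jtr Sig n <= d%:R * srad ^+ n.
Proof.
move=> n0; apply: bmax_le.
  by apply: mulr_ge0; rewrite ?ler0n // exprn_ge0 // srad_ge0.
move=> P HP; rewrite /mxtrace.
apply: le_trans (_ : \sum_(i < d) srad ^+ n <= _).
  apply: ler_sum => i _; apply: le_trans (srad_ub i n0); exact: e_ge.
by rewrite sumr_const card_ord mulr_natl.
Qed.

Lemma jtr_ge n i : e n i i <= jtr Sig n.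
Proof.
have [P HP ->] := e_attain n i i.
apply: le_trans (_ : \tr P <= _); last first.
  exact: (@bmax_ge R _ (prods Sig n) (fun P : 'M[R]_d => \tr P) P HP).
rewrite /mxtrace (bigD1 i) //= lerDl; apply: sumr_ge0 => l _.
exact: (prods_nn HP l l).
Qed.

Lemma jtr_ge0 n : 0 <= jtr Sig n.
Proof. exact: bmax_ge0. Qed.

Lemma walk_entry r x q : wt (e r) x q <= e (r * size q) x (last x q).
Proof.
elim: q x => [|y q IH] x /=; first by rewrite muln0 e0 eqxx.
apply: le_trans (_ : e r x y * e (r * size q) y (last y q) <= _).
  by apply: ler_wpM2l; [exact: e_ge0 | exact: IH].
by rewrite mulnS; apply: e_super.
Qed.

Lemma walk_exists r L j k : exists q, size q = L /\
  e (L * r) j k <= d%:R ^+ L * wt (e r) j q.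
Proof.
elim: L j k => [|L IH] j k.
  by exists [::]; rewrite mul0n e0 /= expr0 mul1r; case: (j == k); rewrite ?ler01.
have [l Hl] := sum_le_max (fun l => e r j l * e (L * r) l k).
have [q [Hq Hb]] := IH l k.
exists (l :: q); split; first by rewrite /= Hq.
rewrite mulSn; apply: le_trans (e_sub _ _ _ _) _; apply: le_trans Hl _.
rewrite /= exprS -mulrA ler_wpM2l ?ler0n // mulrCA ler_wpM2l //; first exact: e_ge0.
Qed.

Lemma UB t : srad < t -> exists C, forall n, jnorm Sig n <= C * t ^+ n.
Proof.
move=> st; have s0 := srad_ge0.
have t0 : 0 < t by apply: le_lt_trans st.
set s' := (srad + t) / 2.
have s's : srad < s' by rewrite /s'; lra.
have s't : s' < t by rewrite /s'; lra.
have s'0 : 0 < s' by apply: le_lt_trans s's.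
have [N HN] := absorb_up d%:R (ltW s'0) s't.
set r := maxn N 1.
have r0 : (0 < r)%N by rewrite /r leq_max orbT.
have Hr : d%:R * s' ^+ r <= t ^+ r by apply: HN; rewrite /r leq_maxl.
set tau := s' ^+ r.
have tau0 : 0 < tau by apply: exprn_gt0.
have cyc x q : wt (e r) x (rcons q x) <= tau ^+ (size q).+1.
  apply: le_trans (walk_entry _ _ _) _; rewrite last_rcons size_rcons.
  apply: le_trans (srad_ub _ _) _; first by rewrite muln_gt0 r0.
  rewrite /tau -exprM; apply: lerXn2r; rewrite ?nnegrE // ltW //.
have wb := walk_bound (e_ge0 r) (jnorm_ge r) tau0 cyc.
set M0 := Num.max 1 (jnorm Sig r / tau) in wb.
have M00 : 0 <= M0 by rewrite /M0 le_max ler01.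
set K := \sum_(q < r) jnorm Sig q.
have K0 : 0 <= K by apply: sumr_ge0 => q _; apply: jnorm_ge0.
set V := Num.max 1 t^-1.
have V0 : 0 <= V by rewrite /V le_max ler01.
have HL L j k : e (L * r) j k <= M0 ^+ d * t ^+ (L * r).
  have [q [Hq Hb]] := walk_exists r L j k.
  apply: le_trans Hb _; apply: le_trans (_ : d%:R ^+ L * (M0 ^+ d * tau ^+ L) <= _).
    by apply: ler_wpM2l; [apply: exprn_ge0; apply: ler0n | rewrite -Hq; apply: wb].
  rewrite mulrCA ler_wpM2l ?exprn_ge0 // -exprMn mulnC exprM.
  apply: lerXn2r => //; rewrite nnegrE.
    by apply: mulr_ge0; rewrite ?ler0n // exprn_ge0 // ltW.
  by rewrite exprn_ge0 // ltW.
exists (d%:R * (M0 ^+ d * K * V ^+ r)) => n.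
apply: jnorm_le.
  have CC0 : 0 <= d%:R * (M0 ^+ d * K * V ^+ r).
    by rewrite mulr_ge0 ?ler0n // mulr_ge0 ?exprn_ge0 // mulr_ge0 ?exprn_ge0.
  by apply: mulr_ge0 CC0 _; rewrite exprn_ge0 // ltW.
move=> j k.
have En : n = (n %/ r * r + n %% r)%N by rewrite -divn_eq.
have qr : (n %% r < r)%N by rewrite ltn_mod.
rewrite {1}En; apply: le_trans (e_sub _ _ _ _) _.
apply: le_trans (_ : \sum_(l < d) (M0 ^+ d * t ^+ (n %/ r * r)) * K <= _).
  apply: ler_sum => l _; apply: ler_pM; [exact: e_ge0 | exact: e_ge0 | exact: HL |].
  apply: le_trans (jnorm_ge _ _ _) _.
  rewrite /K (bigD1 (Ordinal qr)) //= lerDl; apply: sumr_ge0 => q _; exact: jnorm_ge0.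
have Hkey : t ^+ (n %/ r * r) <= V ^+ r * t ^+ n.
  have Et : t ^+ n = t ^+ (n %/ r * r) * t ^+ (n %% r) by rewrite -exprD -En.
  rewrite Et mulrCA ler_pMr ?exprn_gt0 //.
  apply: le_trans (_ : V ^+ (n %% r) * t ^+ (n %% r) <= _).
    rewrite -exprMn; apply: exprn_ege1; rewrite /V.
    case: (leP 1 t^-1) => H.
      by rewrite mulVf // gt_eqF.
    by rewrite mul1r; move: H; rewrite invf_lt1 // => /ltW.
  apply: ler_wpM2r; first by rewrite exprn_ge0 // ltW.
  by apply: ler_weXn2l; [rewrite /V le_max lexx | apply: ltnW].
rewrite sumr_const card_ord -[X in X <= _]mulr_natl.
set RHS := (X in _ <= X).
have -> : RHS = d%:R * (M0 ^+ d * (K * (V ^+ r * t ^+ n))) by rewrite /RHS; ring.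
apply: ler_wpM2l; first exact: ler0n.
rewrite -mulrA; apply: ler_wpM2l; first by rewrite exprn_ge0.
by rewrite mulrC; apply: ler_wpM2l.
Qed.

Lemma min_pos (f : nat -> R) n : (forall j, (j < n)%N -> 0 < f j) ->
  exists c, 0 < c /\ forall j, (j < n)%N -> c <= f j.
Proof.
elim: n => [|n IH] H; first by exists 1.
have [c [c0 Hc]] := IH (fun j jn => H j (ltnW jn)).
exists (Num.min c (f n)); split; first by rewrite lt_min c0 H.
move=> j; rewrite ltnS leq_eqVlt => /orP[/eqP->|jn]; rewrite ge_min ?lexx ?orbT //.
by rewrite Hc.
Qed.

Lemma e_pow n i c : (e n i i) ^+ c <= e (c * n) i i.
Proof.
elim: c => [|c IH]; first by rewrite expr0 mul0n e0 eqxx.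
rewrite exprS mulSn; apply: le_trans (e_super _ _ _ _ _).
by apply: ler_wpM2l; [exact: e_ge0 | exact: IH].
Qed.

Variable Delta : nat.
Hypothesis D0 : (0 < Delta)%N.
Hypothesis HD : forall i g, is_delta Sig i g -> (g %| Delta)%N.

Lemma LD t : 0 < t -> t < srad -> exists i c N, 0 < c /\
  forall m, (N <= m)%N -> c * t ^+ (m * Delta) <= e (m * Delta) i i.
Proof.
move=> t0 ts; have [i [n0 [n00 Ht]]] := srad_adh (ltW t0) ts.
set a := e n0 i i in Ht.
have a0 : 0 < a by apply: le_lt_trans Ht; apply: exprn_ge0; apply: ltW.
have [N HN] : exists N, forall m, (N <= m)%N -> 0 < e (m * Delta) i i.
  have p0 : 0 < e 0 i i by rewrite e0 eqxx ltr01.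
  have pD x y : 0 < e x i i -> 0 < e y i i -> 0 < e (x + y) i i.
    move=> Hx Hy; apply: lt_le_trans (e_super x y i i i).
    exact: mulr_gt0.
  have := @semigroup_mult (fun n => 0 < e n i i) n0 Delta p0 pD n00 a0 D0. move=> H; apply: H. move=> g Hg; exact: HD Hg.
have [c0 [c00 Hc0]] := @min_pos (fun j => e ((N + j) * Delta) i i) n0
  (fun j _ => HN _ (leq_addr _ _)).
set Tm := Num.max 1 t ^+ ((N + n0) * Delta).
have Tm1 : 1 <= Tm by apply: exprn_ege1; rewrite le_max lexx.
have Tm0 : 0 < Tm by apply: lt_le_trans Tm1.
exists i, (c0 / Tm), N; split; first exact: divr_gt0.
move=> m Hm.
set k := ((m - N) %/ n0)%N; set j := ((m - N) %% n0)%N.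
have jn : (j < n0)%N by rewrite /j ltn_mod.
have Em : (m * Delta = (k * Delta) * n0 + (N + j) * Delta)%N.
  have : (m - N = k * n0 + j)%N by rewrite /k /j -divn_eq.
  move=> E; rewrite -(subnK Hm) E; ring.
rewrite Em exprD.
apply: le_trans (e_super _ _ _ i _).
have H1 : t ^+ ((k * Delta) * n0) <= e ((k * Delta) * n0) i i.
  apply: le_trans (e_pow _ _ _); rewrite mulnC exprM.
  apply: lerXn2r; [by rewrite nnegrE exprn_ge0 // ltW | by rewrite nnegrE e_ge0 | exact: ltW Ht].
have H2 : t ^+ ((N + j) * Delta) <= Tm.
  apply: le_trans (_ : Num.max 1 t ^+ ((N + j) * Delta) <= _).
    by apply: lerXn2r; rewrite ?nnegrE ?le_max ?lexx ?orbT // ltW.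
  apply: ler_weXn2l; first by rewrite le_max lexx.
  by rewrite leq_mul2r leq_add2l ltnW ?orbT.
have H3 := Hc0 j jn.
have H4 : c0 * (t ^+ ((N + j) * Delta) / Tm) <= e ((N + j) * Delta) i i.
  apply: le_trans H3; rewrite -[X in _ <= X]mulr1; apply: ler_wpM2l; first exact: ltW.
  by rewrite ler_pdivrMr // mul1r.
have -> : c0 / Tm * (t ^+ (k * Delta * n0) * t ^+ ((N + j) * Delta)) =
  t ^+ (k * Delta * n0) * (c0 * (t ^+ ((N + j) * Delta) / Tm)) by ring.
have tA : 0 <= t ^+ (k * Delta * n0) by apply: exprn_ge0; exact: ltW t0.
have tB : 0 <= t ^+ ((N + j) * Delta) by apply: exprn_ge0; exact: ltW t0.
have cB : 0 <= c0 * (t ^+ ((N + j) * Delta) / Tm).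
  by apply: mulr_ge0; [exact: ltW c00 | apply: divr_ge0 => //; exact: ltW Tm0].
exact: ler_pM tA cB H1 H4.
Qed.

Lemma rt_bigmax n (F : 'I_d -> R) : (0 < n)%N -> (forall i, 0 <= F i) ->
  \big[Num.max/0]_(i < d) rt n (F i) = rt n (\big[Num.max/0]_(i < d) F i).
Proof.
move=> n0 F0.
pose K (a b : R) := a = rt n b /\ 0 <= b.
suff : K (\big[Num.max/0]_(i < d) rt n (F i)) (\big[Num.max/0]_(i < d) F i) by case.
apply: (big_ind2 K); first by split; rewrite ?rt0.
  move=> a1 a2 b1 b2 [-> H1] [-> H2]; split; last by rewrite le_max H1.
  case: (leP a2 b2) => ab.
    by rewrite max_r //; apply: rt_mono.
  by rewrite max_l //; apply: rt_mono => //; apply: ltW.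
by move=> i _; split.
Qed.

Lemma conv_D : (fun m : nat =>
      \big[Num.max/0]_(i < d)
        (jent Sig (m.+1 * Delta) i i `^ ((m.+1 * Delta)%:R)^-1))
     @ \oo --> srad.
Proof.
have nn0 m : (0 < m.+1 * Delta)%N by rewrite muln_gt0.
have -> : (fun m : nat => \big[Num.max/0]_(i < d)
        (jent Sig (m.+1 * Delta) i i `^ ((m.+1 * Delta)%:R)^-1)) =
    (fun m => rt (m.+1 * Delta) (\big[Num.max/0]_(i < d) e (m.+1 * Delta) i i)).
  by apply: funext => m; rewrite -rt_bigmax // => i; apply: e_ge0.
apply: conv_root => //.
- by move=> m; apply: leq_trans (ltnW (ltnSn m)) _; rewrite leq_pmulr.
- move=> m; apply: le_trans (e_ge0 (m.+1 * Delta) (Ordinal d0) (Ordinal d0)) _.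
  exact: (le_bigmax _ (fun i => e (m.+1 * Delta) i i) (Ordinal d0)).
- exact: srad_ge0.
- move=> t st; exists 1; exists 0%N => m _; rewrite mul1r.
  apply: bigmax_le => [|i _]; first by apply: exprn_ge0; apply: le_trans srad_ge0 (ltW st).
  apply: le_trans (srad_ub _ (nn0 m)) _.
  by apply: lerXn2r; rewrite ?nnegrE ?srad_ge0 // ?(ltW st) // (le_trans srad_ge0 (ltW st)).
- move=> t t0 ts; have [i [c [N [c0 HN]]]] := LD t0 ts.
  exists c => //; exists N => m Hm; apply: le_trans (HN _ (leqW Hm)) _.
  exact: (le_bigmax _ (fun i => e (m.+1 * Delta) i i) i).
Qed.

Lemma conv_T : (fun m : nat =>
      jtr Sig (m.+1 * Delta) `^ ((m.+1 * Delta)%:R)^-1) @ \oo --> srad.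
Proof.
have nn0 m : (0 < m.+1 * Delta)%N by rewrite muln_gt0.
apply: (@conv_root _ (fun m => jtr Sig (m.+1 * Delta)) (fun m => m.+1 * Delta)%N) => //.
- by move=> m; apply: leq_trans (ltnW (ltnSn m)) _; rewrite leq_pmulr.
- by move=> m; apply: jtr_ge0.
- exact: srad_ge0.
- move=> t st; exists d%:R; exists 0%N => m _.
  apply: le_trans (jtr_le (nn0 m)) _; apply: ler_wpM2l; first exact: ler0n.
  by apply: lerXn2r; rewrite ?nnegrE ?srad_ge0 // ?(ltW st) // (le_trans srad_ge0 (ltW st)).
- move=> t t0 ts; have [i [c [N [c0 HN]]]] := LD t0 ts.
  exists c => //; exists N => m Hm; apply: le_trans (HN _ (leqW Hm)) _.
  exact: jtr_ge.
Qed.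

Lemma conv_G : (fun n : nat => jnorm Sig n.+1 `^ (n.+1%:R)^-1) @ \oo --> srad.
Proof.
apply: (@conv_root _ (fun m => jnorm Sig m.+1) (fun m => m.+1)) => //.
- by move=> m; apply: jnorm_ge0.
- exact: srad_ge0.
- move=> t st; have [C HC] := UB st; exists C; exists 0%N => m _; exact: HC.
move=> t t0 ts; have [i [c [N [c0 HN]]]] := LD t0 ts.
set K := \sum_(q < Delta.+1) jnorm Sig q.
have K1 : 1 <= K.
  apply: le_trans (_ : jnorm Sig 0 <= _).
    by apply: le_trans (jnorm_ge 0 i i); rewrite e0 eqxx.
  rewrite /K big_ord_recl /= lerDl; apply: sumr_ge0 => q _; exact: jnorm_ge0.
have K0 : 0 < K by apply: lt_le_trans K1.
set mt := Num.min 1 t.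
have mt0 : 0 < mt by rewrite lt_min ltr01 t0.
have mt1 : mt <= 1 by rewrite ge_min lexx.
have dK0 : 0 < d%:R * K by apply: mulr_gt0; rewrite ?ltr0n.
exists (c * mt ^+ Delta / (d%:R * K)).
  by apply: divr_gt0 => //; apply: mulr_gt0 => //; apply: exprn_gt0.
exists (N * Delta)%N => m Hm.
set n := m.+1.
set M := (n %/ Delta).+1.
have HM : (N <= M)%N.
  by apply: leq_trans (leqnSn _); rewrite leq_divRL //; apply: leq_trans Hm _.
have nM : (n < M * Delta)%N by rewrite /M ltn_ceil.
have Mn : (M * Delta <= n + Delta)%N.
  by rewrite /M mulSn addnC leq_add2r leq_trunc_div.
set r := (M * Delta - n)%N.
have Er : (M * Delta = n + r)%N by rewrite /r subnKC // ltnW.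
have rD : (r <= Delta)%N by rewrite /r leq_subLR.
have := HN M HM; rewrite Er => H.
have H2 : e (n + r) i i <= d%:R * K * jnorm Sig n.
  apply: le_trans (e_sub _ _ _ _) _.
  apply: le_trans (_ : \sum_(l < d) jnorm Sig n * K <= _).
    apply: ler_sum => l _; apply: ler_pM; [exact: e_ge0 | exact: e_ge0 | exact: jnorm_ge |].
    apply: le_trans (jnorm_ge r l i) _.
    have rD' : (r < Delta.+1)%N by [].
    rewrite /K (bigD1 (Ordinal rD')) //= lerDl; apply: sumr_ge0 => q _; exact: jnorm_ge0.
  rewrite sumr_const card_ord -[X in X <= _]mulr_natl le_eqVlt; apply/orP; left.
  by apply/eqP; ring.
have H3 : mt ^+ Delta * t ^+ n <= t ^+ (n + r).
  rewrite exprD mulrC ler_wpM2l //; first by rewrite exprn_ge0 // ltW.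
  apply: le_trans (_ : mt ^+ r <= _).
    by apply: ler_wiXn2l => //; apply: ltW.
  apply: lerXn2r; [by rewrite nnegrE; apply: ltW | by rewrite nnegrE; apply: ltW |].
  by rewrite /mt ge_min lexx orbT.
rewrite mulrAC ler_pdivrMr //.
apply: le_trans (_ : c * t ^+ (n + r) <= _).
  by rewrite -mulrA; apply: ler_wpM2l => //; apply: ltW.
apply: le_trans H _; apply: le_trans H2 _.
by rewrite mulrC.
Qed.
End Mat.

Unset Implicit Arguments.
Unset Strict Implicit.

Theorem proposition2 (R : realType) (d : nat) (Sig : seq 'M[R]_d)
  (Delta : nat) :
  (0 < d)%N ->
  Sig != [::] ->
  (forall A, A \in Sig -> forall i j, 0 <= A i j) ->
  (0 < Delta)%N ->
  (forall i g, is_delta Sig i g -> (g %| Delta)%N) ->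
  ((fun m : nat =>
      \big[Num.max/0]_(i < d)
        (jent Sig (m.+1 * Delta) i i `^ ((m.+1 * Delta)%:R)^-1))
     @ \oo --> jsr Sig) /\
  ((fun m : nat =>
      jtr Sig (m.+1 * Delta) `^ ((m.+1 * Delta)%:R)^-1)
     @ \oo --> jsr Sig).
Proof.
move=> d0 Sne Snn D0 HD.
have Ejsr : jsr Sig = srad Sig.
  rewrite /jsr; apply: cvg_lim; first exact: Rhausdorff.
  exact: (conv_G Snn Sne d0 D0 HD).
rewrite Ejsr; split.
  exact: (conv_D Snn Sne d0 D0 HD).
exact: (conv_T Snn Sne d0 D0 HD).
Qed.
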